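(* Let $r,r'$ be behaviors with $r\simeq r'$ and $r'$ fork-free (the constructor $\mathrm{fork}$ does not occur in $r'$). Then $\mathcal C(\partial_w r)\sqsubseteq\varepsilon$ for every $w\in\Sigma^*$.
   Context: Let $\Sigma$ be a finite alphabet. Behaviors are the terms generated by $r,s ::= \phi \mid \varepsilon \mid x\ (x\in\Sigma) \mid r+s \mid r\cdot s \mid r^* \mid \mathrm{fork}(r)$. For words $v,w\in\Sigma^*$ the shuffle $v\| w\subseteq \Sigma^*$ is defined by $\varepsilon\|w=\{w\}$, $v\|\varepsilon=\{v\}$, $xv\|yw=\{x\}\cdot(v\|yw)\cup\{y\}\cdot(xv\|w)$ for $x,y\in\Sigma$, and it is lifted to languages by $L\|M=\bigcup_{v\in L,w\in M} v\|w$; $L\cdot M$ denotes concatenation of languages. For $K\subseteq\Sigma^*$ the trace language $L(r,K)\subseteq\Sigma^*$ is defined by structural recursion: $L(\phi,K)=\emptyset$, $L(\varepsilon,K)=K$, $L(x,K)=\{x\}\cdot K$, $L(r+s,K)=L(r,K)\cup L(s,K)$, $L(r\cdot s,K)=L(r,L(s,K))$, $L(r^*,K)$ is the least fixpoint (w.r.t. $\subseteq$) of the monotone map $X\mapsto L(r,X)\cup K$, and $L(\mathrm{fork}(r),K)=L(r)\|K$, where $L(r)=L(r,\{\varepsilon\})$. Semantic containment: $r\sqsubseteq s$ iff $L(r,K)\subseteq L(s,K)$ for all $K\subseteq\Sigma^*$. The concurrent part $\mathcal C(r)$ is the behavior defined by: $\mathcal C(\phi)=\phi$, $\mathcal C(\varepsilon)=\varepsilon$,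 $\mathcal C(x)=\phi$, $\mathcal C(r+s)=\mathcal C(r)+\mathcal C(s)$, $\mathcal C(r\cdot s)=\mathcal C(r)\cdot\mathcal C(s)$, $\mathcal C(r^* )=\mathcal C(r)^*$, $\mathcal C(\mathrm{fork}(r))=\mathrm{fork}(r)$. The derivative $\partial_x r$ of a behavior $r$ by $x\in\Sigma$ is the behavior defined by: $\partial_x\phi=\phi$, $\partial_x\varepsilon=\phi$, $\partial_x y=\varepsilon$ if $y=x$ and $\phi$ otherwise, $\partial_x(r+s)=\partial_x r+\partial_x s$, $\partial_x(r\cdot s)=\partial_x r\cdot s+\mathcal C(r)\cdot\partial_x s$, $\partial_x(r^* )=\partial_x r\cdot r^*$, $\partial_x(\mathrm{fork}(r))=\mathrm{fork}(\partial_x r)$. It is extended to words by $\partial_\varepsilon r=r$ and $\partial_{xw}r=\partial_w(\partial_x r)$ for $x\in\Sigma$, $w\in\Sigma^*$. Similarity $\simeq$ is the smallest relation on behaviors that is reflexive, symmetric, transitive, closed under contexts (if $s\simeq t$ then $E[s]\simeq E[t]$ for every context $E ::= [\,] \mid E^* \mid E\cdot s \mid r\cdot E \mid E+s \mid r+E \mid \mathrm{fork}(E)$, where $E[t]$ replaces the hole by $t$), and contains the axioms $r+(s+t)\simeq(r+s)+t$, $r+s\simeq s+r$, $r+r\simeq r$, $r+\phi\simeq r$, $\phi+r\simeq r$, $\varepsilon\cdot r\simeq r$, $r\cdot\varepsilon\simeq r$, $\varepsilon^*\simeq\varepsilon$, $\mathrm{fork}(\varepsilon)\simeq\varepsilon$,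 $\phi\cdot r\simeq\phi$, $r\cdot\phi\simeq\phi$, $\phi^*\simeq\varepsilon$, $\mathrm{fork}(\phi)\simeq\phi$. *)

(* Defs.v *)
From mathcomp Require Import all_boot.
Set Implicit Arguments.
Unset Strict Implicit.
Unset Printing Implicit Defensive.

Section Behaviors.
Variable Sigma : finType.

Inductive behavior : Type :=
| Phi : behavior
| Eps : behavior
| Sym : Sigma -> behavior
| Plus : behavior -> behavior -> behavior
| Cat : behavior -> behavior -> behavior
| Star : behavior -> behavior
| Fork : behavior -> behavior.

Definition lang := seq Sigma -> Prop.

Definition lang_sub (L M : lang) : Prop := forall w, L w -> M w.
Definition lang_union (L M : lang) : lang := fun w => L w \/ M w.
Definition lang_empty : lang := fun _ => False.
Definition lang_eps : lang := fun w => w = [::].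
Definition lang_prefix (x : Sigma) (K : lang) : lang :=
  fun w => exists2 u, K u & w = x :: u.

(* shuffle of words: shuffle v w u  <->  u \in v || w, following the
   recursive clauses of the definition *)
Inductive shuffle : seq Sigma -> seq Sigma -> seq Sigma -> Prop :=
| shuffle_nil_l w : shuffle [::] w w
| shuffle_nil_r v : shuffle v [::] v
| shuffle_left x y v w u :
    shuffle v (y :: w) u -> shuffle (x :: v) (y :: w) (x :: u)
| shuffle_right x y v w u :
    shuffle (x :: v) w u -> shuffle (x :: v) (y :: w) (y :: u).

Definition lang_shuffle (L M : lang) : lang :=
  fun u => exists v w, [/\ L v, M w & shuffle v w u].

(* least fixpoint (w.r.t. inclusion) of a map on languages:
   intersection of all prefixpoints (Knaster-Tarski) *)
Definition lfp (F : lang -> lang) : lang :=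
  fun w => forall X : lang, lang_sub (F X) X -> X w.

Fixpoint L (r : behavior) (K : lang) {struct r} : lang :=
  match r with
  | Phi => lang_empty
  | Eps => K
  | Sym x => lang_prefix x K
  | Plus r s => lang_union (L r K) (L s K)
  | Cat r s => L r (L s K)
  | Star r => lfp (fun X => lang_union (L r X) K)
  | Fork r => lang_shuffle (L r lang_eps) K
  end.

Definition contained (r s : behavior) : Prop :=
  forall K : lang, lang_sub (L r K) (L s K).

Fixpoint conc (r : behavior) : behavior :=
  match r with
  | Phi => Phi
  | Eps => Eps
  | Sym _ => Phi
  | Plus r s => Plus (conc r) (conc s)
  | Cat r s => Cat (conc r) (conc s)
  | Star r => Star (conc r)
  | Fork r => Fork r
  end.

Fixpoint deriv (x : Sigma) (r : behavior) : behavior :=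
  match r with
  | Phi => Phi
  | Eps => Phi
  | Sym y => if y == x then Eps else Phi
  | Plus r s => Plus (deriv x r) (deriv x s)
  | Cat r s => Plus (Cat (deriv x r) s) (Cat (conc r) (deriv x s))
  | Star r => Cat (deriv x r) (Star r)
  | Fork r => Fork (deriv x r)
  end.

Fixpoint deriv_word (w : seq Sigma) (r : behavior) : behavior :=
  match w with
  | [::] => r
  | x :: w' => deriv_word w' (deriv x r)
  end.

Inductive context : Type :=
| Hole : context
| CStar : context -> context
| CCatL : context -> behavior -> context
| CCatR : behavior -> context -> context
| CPlusL : context -> behavior -> context
| CPlusR : behavior -> context -> context
| CFork : context -> context.

Fixpoint plug (E : context) (t : behavior) : behavior :=
  match E with
  | Hole => t
  | CStar E => Star (plug E t)
  | CCatL E s => Cat (plug E t) s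
  | CCatR r E => Cat r (plug E t)
  | CPlusL E s => Plus (plug E t) s
  | CPlusR r E => Plus r (plug E t)
  | CFork E => Fork (plug E t)
  end.

Inductive sim : behavior -> behavior -> Prop :=
| sim_refl r : sim r r
| sim_sym r s : sim r s -> sim s r
| sim_trans r s t : sim r s -> sim s t -> sim r t
| sim_ctx E s t : sim s t -> sim (plug E s) (plug E t)
| sim_plusA r s t : sim (Plus r (Plus s t)) (Plus (Plus r s) t)
| sim_plusC r s : sim (Plus r s) (Plus s r)
| sim_plusI r : sim (Plus r r) r
| sim_plus0r r : sim (Plus r Phi) r
| sim_plus0l r : sim (Plus Phi r) r
| sim_cat1l r : sim (Cat Eps r) r
| sim_cat1r r : sim (Cat r Eps) r
| sim_star1 : sim (Star Eps) Eps
| sim_fork1 : sim (Fork Eps) Eps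
| sim_cat0l r : sim (Cat Phi r) Phi
| sim_cat0r r : sim (Cat r Phi) Phi
| sim_star0 : sim (Star Phi) Eps
| sim_fork0 : sim (Fork Phi) Phi.

Fixpoint fork_free (r : behavior) : bool :=
  match r with
  | Phi | Eps | Sym _ => true
  | Plus r s | Cat r s => fork_free r && fork_free s
  | Star r => fork_free r
  | Fork _ => false
  end.

End Behaviors.

(* Main.v *)
Require Import Defs.
From mathcomp Require Import all_boot.

Section S.
Variable Sigma : finType.
Notation B := (behavior Sigma).

Lemma simPlus (a a' b b' : B) : sim a a' -> sim b b' -> sim (Plus a b) (Plus a' b').
Proof.
move=> H1 H2; apply: (@sim_trans _ _ (Plus a' b)).
exact (sim_ctx (CPlusL (Hole Sigma) b) H1). exact (sim_ctx (CPlusR a' (Hole Sigma)) H2).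
Qed.
Lemma simCat (a a' b b' : B) : sim a a' -> sim b b' -> sim (Cat a b) (Cat a' b').
Proof.
move=> H1 H2; apply: (@sim_trans _ _ (Cat a' b)).
exact (sim_ctx (CCatL (Hole Sigma) b) H1). exact (sim_ctx (CCatR a' (Hole Sigma)) H2).
Qed.
Lemma simStar (a a' : B) : sim a a' -> sim (Star a) (Star a').
Proof. move=> H; exact (sim_ctx (CStar (Hole Sigma)) H). Qed.
Lemma simFork (a a' : B) : sim a a' -> sim (Fork a) (Fork a').
Proof. move=> H; exact (sim_ctx (CFork (Hole Sigma)) H). Qed.

Lemma sim_catPhi (a : B) : sim (Cat a (Phi Sigma)) (Phi Sigma).
Proof. exact: sim_cat0r. Qed.

Lemma dc (s t : B) : sim s t ->
  sim (conc s) (conc t) /\ forall x, sim (deriv x s) (deriv x t).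
Proof.
elim=> {s t}.
- by move=> r; split=> // *; apply: sim_refl.
- by move=> r s _ [H1 H2]; split=> [|x]; apply: sim_sym.
- move=> r s t _ [H1 H2] _ [H3 H4]; split=> [|x]; [exact: sim_trans H1 H3|].
  exact: sim_trans (H2 x) (H4 x).
- move=> E s t H [IHc IHd]; elim: E => [|E IHE|E IHE s0|r0 E IHE|E IHE s0|r0 E IHE|E IHE] //=;
    try (case: IHE => Hc Hd).
  + split=> [|x]; first exact: simStar.
    apply: simCat=> //; apply: simStar; exact: sim_ctx.
  + split=> [|x]; first (apply: simCat=> //; exact: sim_refl).
    apply: simPlus; apply: simCat=> //; try exact: sim_refl.
  + split=> [|x]; first (apply: simCat=> //; exact: sim_refl).
    apply: simPlus; apply: simCat=> //; try exact: sim_refl; exact: sim_ctx.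
  + split=> [|x]; apply: simPlus=> //; exact: sim_refl.
  + split=> [|x]; apply: simPlus=> //; exact: sim_refl.
  + split=> [|x]; first exact (sim_ctx (CFork E) H).
    exact: simFork.
- by move=> r s t; split=> [|x]; apply: sim_plusA.
- by move=> r s; split=> [|x]; apply: sim_plusC.
- by move=> r; split=> [|x]; apply: sim_plusI.
- by move=> r; split=> [|x]; apply: sim_plus0r.
- by move=> r; split=> [|x]; apply: sim_plus0l.
- move=> r; split=> [|x] /=; first exact: sim_cat1l.
  apply: (@sim_trans _ _ (Plus (Phi Sigma) (deriv x r))); [apply: simPlus; [exact: sim_cat0l|exact: sim_cat1l]|exact: sim_plus0l].
- move=> r; split=> [|x] /=; first exact: sim_cat1r.
  apply: (@sim_trans _ _ (Plus (deriv x r) (Phi Sigma))); [apply: simPlus; [exact: sim_cat1r|exact: sim_cat0r]|exact: sim_plus0r].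
- split=> [|x] /=; [exact: sim_star1 | exact: sim_cat0l].
- split=> [|x] /=; [exact: sim_fork1 | exact: sim_fork0].
- move=> r; split=> [|x] /=; first exact: sim_cat0l.
  apply: (@sim_trans _ _ (Plus (Phi Sigma) (Phi Sigma))); [apply: simPlus; exact: sim_cat0l|exact: sim_plus0l].
- move=> r; split=> [|x] /=; first exact: sim_cat0r.
  apply: (@sim_trans _ _ (Plus (Phi Sigma) (Phi Sigma))); [apply: simPlus; exact: sim_cat0r|exact: sim_plus0l].
- split=> [|x] /=; [exact: sim_star0 | exact: sim_cat0l].
- split=> [|x] /=; exact: sim_fork0.
Qed.

Arguments dc [s t].
Lemma dw_sim (w : seq Sigma) (r r' : B) : sim r r' -> sim (deriv_word w r) (deriv_word w r').
Proof.
elim: w r r' => [|x w IH] r r' H //=; exact: (IH _ _ (proj2 (dc H) x)).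
Qed.

Arguments dw_sim w [r r'].
Lemma conc_ff (r : B) : fork_free r -> fork_free (conc r).
Proof. by elim: r => //= [r IHr s IHs|r IHr s IHs] /andP[/IHr-> /IHs->]. Qed.

Lemma deriv_ff x (r : B) : fork_free r -> fork_free (deriv x r).
Proof.
elim: r => [||y|r IHr s IHs|r IHr s IHs|r IHr|r IHr] //=.
- by case: (y == x).
- by move=> /andP[/IHr-> /IHs->].
- by move=> /andP[H1 H2]; rewrite IHr // H2 conc_ff // IHs.
- by move=> H; rewrite IHr.
Qed.

Lemma dw_ff w (r : B) : fork_free r -> fork_free (deriv_word w r).
Proof. elim: w r => [|x w IH] r H //=; apply: IH; exact: deriv_ff. Qed.

Lemma L_mono (r : B) : forall K K', lang_sub K K' -> lang_sub (L r K) (L r K').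
Proof.
elim: r => [||y|r IHr s IHs|r IHr s IHs|r IHr|r IHr] K K' HK w //=.
- exact: HK.
- by case=> u Hu ->; exists u => //; apply: HK.
- by case=> [H|H]; [left; exact: IHr H|right; exact: IHs H].
- by apply: IHr; apply: IHs.
- move=> H X HX; apply: H => v [Hv|Hv]; apply: HX; [left|right; exact: HK].
  exact: Hv.
- by case=> v [w' [H1 H2 H3]]; exists v, w'; split=> //; apply: HK.
Qed.

Lemma L_empty (r : B) w : L r (@lang_empty Sigma) w -> False.
Proof.
elim: r w => [||y|r IHr s IHs|r IHr s IHs|r IHr|r IHr] w //=.
- by case.
- by case=> [/IHr|/IHs].
- move=> H; apply: (IHr w); exact: (@L_mono r _ _ (fun v Hv => IHs v Hv) w H).
- move=> H; apply: (H (@lang_empty Sigma)) => v [/IHr|] //.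
- by case=> v [w' [_ [] _]].
Qed.

Lemma shuffle_eps (w u : seq Sigma) : shuffle [::] w u -> u = w.
Proof. by move=> H; inversion H. Qed.

Definition leq_ (K M : lang Sigma) := forall w, K w <-> M w.

Lemma sound (s t : B) : sim s t -> forall K, leq_ (L s K) (L t K).
Proof.
elim=> {s t}.
- by [].
- by move=> r s _ H K w; split=> /H.
- by move=> r s t _ H1 _ H2 K w; split=> [/H1/H2|/H2/H1].
- move=> E s t _ IH; elim: E => [|E IHE|E IHE s0|r0 E IHE|E IHE s0|r0 E IHE|E IHE] K w /=.
  + exact: IH.
  + split=> H X HX; apply: H => v Hv; apply: HX; case: Hv=> [/IHE|] Hv;
    by [left|right].
  + exact: IHE.
  + split; apply: L_mono=> v; apply IHE.
  + by split=> [][H|H]; [left; apply/IHE|right|left; apply/IHE|right].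
  + by split=> [][H|H]; [left|right; apply/IHE|left|right; apply/IHE].
  + by split=> [][v [w' [H1 H2 H3]]]; exists v, w'; split=> //; apply/IHE.
- by move=> r s t K w /=; rewrite /lang_union; tauto.
- by move=> r s K w /=; rewrite /lang_union; tauto.
- by move=> r K w /=; rewrite /lang_union; tauto.
- by move=> r K w /=; rewrite /lang_union /lang_empty; tauto.
- by move=> r K w /=; rewrite /lang_union /lang_empty; tauto.
- by [].
- by [].
- move=> K w /=; split=> [H|H X HX]; last by apply: HX; right.
  apply: H => v [] //.
- move=> K w /=; split=> [[v [w' [H1 H2 H3]]]|H].
  + by rewrite /lang_eps in H1; subst v; rewrite (shuffle_eps _ _ H3).
  + by exists [::], w; split=> //; constructor.
- by [].
- by move=> r K w /=; split=> // /L_empty.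
- move=> K w /=; split=> [H|H X HX]; last by apply: HX; right.
  apply: H => v [] //.
- by move=> K w /=; split=> // [[v [w' [[]]]]].
Qed.

Arguments sound [s t].
Lemma conc_sub (r : B) : fork_free r -> forall K, lang_sub (L (conc r) K) K.
Proof.
elim: r => [|||r IHr s IHs|r IHr s IHs|r IHr|r IHr] H K w //=.
- by case/andP: H=> H1 H2 [/IHr|/IHs]; auto.
- case/andP: H=> H1 H2 Hw; apply: (IHs H2); exact: (IHr H1).
- move=> Hw; apply: Hw => v [/IHr|] //; auto.
Qed.

End S.

Theorem lemma9 (Sigma : finType) (r r' : behavior Sigma) :
  sim r r' -> fork_free r' ->
  forall w : seq Sigma, contained (conc (deriv_word w r)) (Eps Sigma).
Proof.
move=> H Hf w K u Hu /=.
have Hs := proj1 (dc _ _ _ (dw_sim _ w _ _ H)).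
apply: (conc_sub _ _ (dw_ff _ w _ Hf)); apply/(sound _ _ _ Hs); exact: Hu.
Qed.
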